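(* Let $G$ be a finite two-player zero-sum game with finite pure strategy sets $S_1,S_2$ and payoffs $v_1=-v_2$, extended bilinearly to mixed strategies. Run Anytime Double Oracle (ADO) from nonempty initial populations $\Pi^0_1\subseteq S_1$, $\Pi^0_2\subseteq S_2$: at each iteration $t=0,1,\ldots$, for each $i\in\{1,2\}$ let $\pi^t_i$ be a mixed strategy satisfying $$\pi^t_i\in\arg\max_{\sigma_i\in\Delta(\Pi^t_i)}\ \min_{\sigma_{-i}\in\Delta(S_{-i})} v_i(\sigma_i,\sigma_{-i}),$$ then for each $i$ choose a pure best response $\beta_i$ of player $i$ to $\pi^t_{-i}$ (a novel one $\beta_i\notin\Pi^t_i$ if such a best response exists) and set $\Pi^{t+1}_i=\Pi^t_i\cup\{\beta_i\}$. Then for every iteration $t$ for which $\pi^{t+1}$ is defined, $e(\pi^{t+1})\le e(\pi^t)$; that is, the exploitability of the ADO restricted profile is monotonically non-increasing.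
   Context: $\Delta(\Pi_i)$ denotes the set of mixed strategies of player $i$ supported on $\Pi_i$. The exploitability of a mixed strategy profile $\pi=(\pi_1,\pi_2)$ is $e(\pi)=\sum_{i\in\{1,2\}}\max_{\pi_i'}v_i(\pi_i',\pi_{-i})$, where the maximum is over all mixed strategies of player $i$ in the full game. A best response of player $i$ to $\pi_{-i}$ is a strategy maximizing $v_i(\cdot,\pi_{-i})$. *)

(* Defs.v *)
From mathcomp Require Import all_boot all_order all_algebra.
From mathcomp Require Import boolp classical_sets reals.
Set Implicit Arguments. Unset Strict Implicit. Unset Printing Implicit Defensive.
Import Order.TTheory GRing.Theory Num.Theory.
Local Open Scope ring_scope.
Local Open Scope classical_set_scope.

Section Game.
Variables (R : realType) (S1 S2 : finType).

Definition mixed (S : finType) (p : {ffun S -> R}) : Prop :=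
  (forall s, 0 <= p s) /\ \sum_(s : S) p s = 1.

Definition mixed_on (S : finType) (Pi : {set S}) (p : {ffun S -> R}) : Prop :=
  mixed p /\ forall s, s \notin Pi -> p s = 0.

Definition pure (S : finType) (s : S) : {ffun S -> R} :=
  [ffun x => if x == s then 1 else 0].

Definition v1 (A : S1 -> S2 -> R) (p1 : {ffun S1 -> R}) (p2 : {ffun S2 -> R}) : R :=
  \sum_(s1 : S1) \sum_(s2 : S2) p1 s1 * p2 s2 * A s1 s2.
Definition v2 (A : S1 -> S2 -> R) p1 p2 : R := - v1 A p1 p2.

Definition guarantee1 A (p1 : {ffun S1 -> R}) : R :=
  inf [set v1 A p1 q | q in [set q : {ffun S2 -> R} | mixed q]].
Definition guarantee2 A (p2 : {ffun S2 -> R}) : R :=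
  inf [set v2 A q p2 | q in [set q : {ffun S1 -> R} | mixed q]].

Definition restricted_maximin1 A (Pi : {set S1}) p1 : Prop :=
  mixed_on Pi p1 /\ forall q, mixed_on Pi q -> guarantee1 A q <= guarantee1 A p1.
Definition restricted_maximin2 A (Pi : {set S2}) p2 : Prop :=
  mixed_on Pi p2 /\ forall q, mixed_on Pi q -> guarantee2 A q <= guarantee2 A p2.

Definition best_response1 A (p2 : {ffun S2 -> R}) (b : {ffun S1 -> R}) : Prop :=
  mixed b /\ forall q, mixed q -> v1 A q p2 <= v1 A b p2.
Definition best_response2 A (p1 : {ffun S1 -> R}) (b : {ffun S2 -> R}) : Prop :=
  mixed b /\ forall q, mixed q -> v2 A p1 q <= v2 A p1 b.

Definition exploitability A (p1 : {ffun S1 -> R}) (p2 : {ffun S2 -> R}) : R :=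
  sup [set v1 A q p2 | q in [set q : {ffun S1 -> R} | mixed q]]
  + sup [set v2 A p1 q | q in [set q : {ffun S2 -> R} | mixed q]].

End Game.

(* Main.v *)
Require Import Defs.
From mathcomp Require Import all_boot all_order all_algebra.
From mathcomp Require Import boolp classical_sets reals.
Import Order.TTheory GRing.Theory Num.Theory.
Local Open Scope ring_scope.

Lemma expl_eq (R : realType) (S1 S2 : finType) (A : S1 -> S2 -> R) p1 p2 :
  exploitability A p1 p2 = - guarantee2 A p2 - guarantee1 A p1.
Proof.
rewrite /exploitability /guarantee1 /guarantee2 /inf !opprK.
congr (sup _ + sup _).
- rewrite eqEsubset; split => x /=.
  + move=> [q Hq <-]; exists (v2 A q p2); first by exists q.
    by rewrite /v2 opprK.
  + move=> [y [q Hq <-] <-]; exists q => //; by rewrite /v2 opprK.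
- rewrite eqEsubset; split => x /=.
  + move=> [q Hq <-]; exists (v1 A p1 q); first by exists q.
    by [].
  + by move=> [y [q Hq <-] <-]; exists q.
Qed.

Theorem proposition1 (R : realType) (S1 S2 : finType) (A : S1 -> S2 -> R)
  (Pi1 : nat -> {set S1}) (Pi2 : nat -> {set S2})
  (pi1 : nat -> {ffun S1 -> R}) (pi2 : nat -> {ffun S2 -> R})
  (b1 : nat -> S1) (b2 : nat -> S2) :
  Pi1 0%N != finset.set0 -> Pi2 0%N != finset.set0 ->
  (forall t, restricted_maximin1 A (Pi1 t) (pi1 t)) ->
  (forall t, restricted_maximin2 A (Pi2 t) (pi2 t)) ->
  (forall t, best_response1 A (pi2 t) (pure R (b1 t))) ->
  (forall t, best_response2 A (pi1 t) (pure R (b2 t))) ->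
  (forall t, (exists s, s \notin Pi1 t /\ best_response1 A (pi2 t) (pure R s)) ->
             b1 t \notin Pi1 t) ->
  (forall t, (exists s, s \notin Pi2 t /\ best_response2 A (pi1 t) (pure R s)) ->
             b2 t \notin Pi2 t) ->
  (forall t, Pi1 t.+1 = Pi1 t :|: [set b1 t]) ->
  (forall t, Pi2 t.+1 = Pi2 t :|: [set b2 t]) ->
  forall t, exploitability A (pi1 t.+1) (pi2 t.+1) <= exploitability A (pi1 t) (pi2 t).
Proof.
move=> _ _ H1 H2 _ _ _ _ E1 E2 t.
rewrite !expl_eq.
have g1 : guarantee1 A (pi1 t) <= guarantee1 A (pi1 t.+1).
  have [[m0 s0] _] := H1 t.
  apply: (proj2 (H1 t.+1)); split => // s; rewrite E1 finset.in_setU negb_or => /andP[hs _].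
  exact: s0.
have g2 : guarantee2 A (pi2 t) <= guarantee2 A (pi2 t.+1).
  have [[m0 s0] _] := H2 t.
  apply: (proj2 (H2 t.+1)); split => // s; rewrite E2 finset.in_setU negb_or => /andP[hs _].
  exact: s0.
by rewrite lerD // lerN2.
Qed.
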